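(* Let $G$ be a graph and let $S\subseteq V(G)$ be a twin cover of $G$ with $|S|=k$. Let $C_i$ and $C_j$ be connected components of $G-S$, each with more than $k$ vertices, such that $|C_i|\equiv|C_j|\pmod 2$ and $N(u)\cap S=N(w)\cap S$ for $u\in C_i$, $w\in C_j$. If $\sigma$ is a layout of $G$ and $q$ is an integer such that every vertex $v\in C_i\cup C_j$ satisfies $|\{s\in S: s<_\sigma v\}|+1=q$, then $\gamma^+(C_i,\sigma)=\gamma^+(C_j,\sigma)$.
   Context: All graphs are finite, simple and undirected. For a layout (linear ordering) $\sigma$ of $V(G)$ and $v\in V(G)$, $N_L(v,\sigma)$ and $N_R(v,\sigma)$ are the sets of neighbours of $v$ preceding and following $v$, and $\mathcal{I}(v,\sigma)=\big||N_L(v,\sigma)|-|N_R(v,\sigma)|\big|$. A twin cover of $G$ is a set $S\subseteq V(G)$ such that every connected component $X$ of $G-S$ is a set of true twins in $G$ ($N[u]=N[v]$ for all $u,v\in X$). Let $\gamma(\ell)=\ell^2/2$ if $\ell$ is even and $\gamma(\ell)=(\ell^2-1)/2$ if $\ell$ is odd. For a component $C$ of $G-S$, $\gamma^+(C,\sigma)=\sum_{v\in C}\mathcal{I}(v,\sigma)-\gamma(|C|)$ (excess imbalance). The number $|\{s\in S:s<_\sigma v\}|+1$ is the location of $v$ in $\sigma$; the hypothesis says $C_i$ and $C_j$ are placed at the same location. *)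

(* Defs.v *)
From mathcomp Require Import all_boot all_order all_algebra.
Set Implicit Arguments. Unset Strict Implicit. Unset Printing Implicit Defensive.
Import Order.TTheory GRing.Theory Num.Theory.

Definition simple_graph (T : finType) (e : rel T) :=
  symmetric e /\ irreflexive e.

Definition nbhd (T : finType) (e : rel T) (v : T) : {set T} := [set w | e v w].
Definition cnbhd (T : finType) (e : rel T) (v : T) : {set T} :=
  [set w | (w == v) || e v w].

Definition del_rel (T : finType) (e : rel T) (S : {set T}) : rel T :=
  [rel x y | [&& x \notin S, y \notin S & e x y]].

Definition is_component (T : finType) (e : rel T) (S : {set T}) (C : {set T}) :=
  exists2 x, x \notin S & C = [set y | connect (del_rel e S) x y].

Definition twin_cover (T : finType) (e : rel T) (S : {set T}) :=
  forall C, is_component e S C ->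
    forall u v, u \in C -> v \in C -> cnbhd e u = cnbhd e v.

(* A layout is a linear ordering of V(G), given as a bijection
   sigma : T -> 'I_#|T| (position of each vertex); u <_sigma v iff
   sigma u < sigma v. *)
Definition layout (T : finType) (sigma : T -> 'I_#|T|) := bijective sigma.

Definition NL (T : finType) (e : rel T) (sigma : T -> 'I_#|T|) (v : T) : {set T} :=
  [set u in nbhd e v | sigma u < sigma v].
Definition NR (T : finType) (e : rel T) (sigma : T -> 'I_#|T|) (v : T) : {set T} :=
  [set u in nbhd e v | sigma v < sigma u].

Definition imbalance (T : finType) (e : rel T) (sigma : T -> 'I_#|T|) (v : T) : nat :=
  absz (Posz #|NL e sigma v| - Posz #|NR e sigma v|)%R.

Definition gamma (l : nat) : nat :=
  if odd l then (l ^ 2 - 1) %/ 2 else l ^ 2 %/ 2.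

Definition excess_imbalance (T : finType) (e : rel T) (sigma : T -> 'I_#|T|)
  (C : {set T}) : int :=
  (Posz (\sum_(v in C) imbalance e sigma v) - Posz (gamma #|C|))%R.

Definition location (T : finType) (sigma : T -> 'I_#|T|) (S : {set T}) (v : T) : nat :=
  #|[set s in S | sigma s < sigma v]|.+1.

(* Main.v *)
Require Import Defs.
From mathcomp Require Import all_boot all_order all_algebra zify.
Import Order.TTheory GRing.Theory Num.Theory.
Set Implicit Arguments. Unset Strict Implicit. Unset Printing Implicit Defensive.

Section Arith.
Local Open Scope ring_scope.
Definition Hs (d : int) (n : nat) : int :=
  \sum_(i < n) `|d + (2 * i)%N%:Z - n%:Z + 1|.

Lemma gamma_step n : gamma n.+2 = (gamma n + 2 * n.+1)%N.
Proof.
rewrite /gamma !oddS negbK; case: (boolP (odd n)) => h //; last lia.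
have : (0 < n)%N by case: n h.
lia.
Qed.

Lemma Hs_step (d : int) n : `|d| <= n.+1%:Z -> Hs d n.+2 = Hs d n + (2 * n.+1)%N%:Z.
Proof.
move=> hd; rewrite /Hs big_ord_recl big_ord_recr /=.
have -> : \sum_(i < n) `|d + (2 * (bump 0 (widen_ord (leqnSn n) i)))%N%:Z - n.+2%:Z + 1|
   = \sum_(i < n) `|d + (2 * i)%N%:Z - n%:Z + 1|.
  apply: eq_bigr => i _; congr `|_|; rewrite /bump /=; lia.
have h1 : d + (2 * 0)%N%:Z - n.+2%:Z + 1 <= 0.
  move: hd; rewrite ler_norml => /andP[_ hd]. lia.
have h2 : 0 <= d + (2 * n.+1)%N%:Z - n.+2%:Z + 1.
  move: hd; rewrite ler_norml => /andP[hd _]; lia.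
rewrite (ler0_norm h1) (ger0_norm h2) /bump /=; lia.
Qed.

Lemma Hs_gamma (d : int) n t : `|d| < n%:Z ->
  Hs d (n + 2 * t) - (gamma (n + 2 * t))%:Z = Hs d n - (gamma n)%:Z.
Proof.
move=> hd; elim: t => [|t IH]; first by rewrite muln0 addn0.
have -> : (n + 2 * t.+1 = (n + 2 * t).+2)%N by lia.
rewrite Hs_step ?gamma_step; last first.
  apply: le_trans (ltW hd) _; lia.
rewrite -IH; lia.
Qed.

Lemma Hs_eq (d : int) (n m : nat) : `|d| < n%:Z -> `|d| < m -> odd n = odd m ->
  Hs d n - (gamma n)%:Z = Hs d m - (gamma m)%:Z.
Proof.
wlog le: n m / (n <= m)%N.
  move=> W h1 h2 ho; case: (leqP n m) => h; first exact: W.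
  by symmetry; apply: W => //; apply: ltnW.
move=> h1 h2 ho; have [t ->] : exists t, m = (n + 2 * t)%N.
  exists ((m - n) %/ 2)%N; move: ho; rewrite -(subnK le) oddD; lia.
by rewrite Hs_gamma.
Qed.
End Arith.

Lemma comp_notS (T : finType) (e : rel T) S C :
  is_component e S C -> forall v, v \in C -> v \notin S.
Proof.
case=> x xS -> v; rewrite inE => /connectP[p pth ->].
case/lastP: p pth => [|p z] //=; rewrite rcons_path last_rcons.
by case/andP=> _ /and3P[].
Qed.

Lemma nbhd_comp (T : finType) (e : rel T) S C v :
  simple_graph e -> twin_cover e S -> is_component e S C -> v \in C ->
  nbhd e v = (nbhd e v :&: S) :|: (C :\ v).
Proof.
move=> [esym eirr] tw Cc vC; have vS := comp_notS Cc vC.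
apply/setP=> w; rewrite !inE.
case: (boolP (w \in S)) => wS /=; rewrite ?andbT ?andbF /=.
  case: (boolP (w \in C)) => wC; last by rewrite andbF orbF.
  by move: (comp_notS Cc wC); rewrite wS.
case: (eqVneq w v) => [->|wv] /=; first by rewrite eirr.
apply/idP/idP => h.
  move: Cc vC => [x xS CE]; rewrite CE !inE => xv.
  by apply: connect_trans xv (connect1 _); apply/and3P.
have E := tw C Cc v w vC h.
have : w \in cnbhd e w by rewrite inE eqxx.
by rewrite -E inE (negbTE wv).
Qed.

Lemma ord_lt_neq N (a b : 'I_N) : a != b -> (a < b)%N = ~~ (b < a)%N.
Proof.
move=> h; rewrite ltnNge leq_eqVlt negb_or; suff -> : (nat_of_ord b == a) = false by [].
by apply/negbTE; rewrite val_eqE eq_sym.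
Qed.

Lemma imb_formula (T : finType) (e : rel T) S C (sigma : T -> 'I_#|T|) v N0 P :
  simple_graph e -> twin_cover e S -> is_component e S C -> injective sigma ->
  v \in C -> nbhd e v :&: S = N0 -> [set s in S | (sigma s < sigma v)%N] = P ->
  Posz (imbalance e sigma v) =
  `| (Posz #|N0 :&: P| - Posz #|N0 :\: P| + Posz (2 * #|[set u in C | (sigma u < sigma v)%N]|)
      - Posz #|C| + 1)%R |%R.
Proof.
move=> sg tw Cc sinj vC hN hP.
have neqs : forall u, u != v -> sigma v != sigma u.
  by move=> u uv; apply: contra uv => /eqP /sinj ->.
have dis : forall A B : {set T}, A \subset S -> B \subset C -> #|A :|: B| = (#|A| + #|B|)%N.
  move=> A B sA sB; rewrite cardsU; suff -> : A :&: B = set0 by rewrite cards0 subn0.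
  apply/setP=> u; rewrite !inE; apply/negbTE/andP => [[ua ub]].
  by have := comp_notS Cc (subsetP sB u ub); rewrite (subsetP sA u ua).
have hL : NL e sigma v = (N0 :&: P) :|: [set u in C | (sigma u < sigma v)%N].
  rewrite /NL (nbhd_comp sg tw Cc vC) -hN -hP; apply/setP=> u; rewrite !inE.
  case: (eqVneq u v) => [->|uv]; first by rewrite ltnn !andbF.
  by case: (e v u); case: (u \in S); case: (u \in C); case: (sigma u < sigma v)%N.
have hR : NR e sigma v = (N0 :\: P) :|: [set u in C | (sigma v < sigma u)%N].
  rewrite /NR (nbhd_comp sg tw Cc vC) -hN -hP; apply/setP=> u; rewrite !inE.
  case: (eqVneq u v) => [->|uv]; first by case: sg => _ ir; rewrite ltnn ir !andbF.
  rewrite (ord_lt_neq (neqs u uv)).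
  by case: (e v u); case: (u \in S); case: (u \in C); case: (sigma u < sigma v)%N.
have cL : #|NL e sigma v| = (#|N0 :&: P| + #|[set u in C | (sigma u < sigma v)%N]|)%N.
  rewrite hL dis // ?subIset ?(subsetIr) -?hN ?subsetIr //; apply/subsetP=> u; rewrite inE => /andP[].
  done.
have cR : #|NR e sigma v| = (#|N0 :\: P| + #|[set u in C | (sigma v < sigma u)%N]|)%N.
  rewrite hR dis //; last by apply/subsetP=> u; rewrite inE => /andP[].
  by rewrite -hN; apply/subsetP=> u; rewrite !inE => /and3P[].
have cC : #|C| = (1 + #|[set u in C | (sigma u < sigma v)%N]| + #|[set u in C | (sigma v < sigma u)%N]|)%N.
  have e1 : (C :\ v) :&: [set u | (sigma u < sigma v)%N] = [set u in C | (sigma u < sigma v)%N].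
    apply/setP=> u; rewrite !inE.
    case: (eqVneq u v) => [->|uv]; first by rewrite ltnn !andbF.
    by rewrite andbC.
  have e2 : (C :\ v) :\: [set u | (sigma u < sigma v)%N] = [set u in C | (sigma v < sigma u)%N].
    apply/setP=> u; rewrite !inE.
    case: (eqVneq u v) => [->|uv]; first by rewrite ltnn !andbF.
    by rewrite (ord_lt_neq (neqs u uv)) andbC.
  rewrite (cardsD1 v C) vC -(cardsID [set u | (sigma u < sigma v)%N] (C :\ v)) e1 e2.
  by rewrite addnA.
rewrite /imbalance abszE cL cR cC; congr `|_|%R.
lia.
Qed.

Lemma sum_rank (T : finType) (C : {set T}) (sigma : T -> 'I_#|T|) (F : nat -> int) :
  injective sigma ->
  (\sum_(v in C) F #|[set u in C | (sigma u < sigma v)%N]| = \sum_(i < #|C|) F i)%R.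
Proof.
move=> sinj; set r := fun v => #|[set u in C | (sigma u < sigma v)%N]|.
have mono : forall v w, v \in C -> (sigma v < sigma w)%N -> (r v < r w)%N.
  move=> v w vC lt; apply: proper_card; rewrite properE; apply/andP; split.
    apply/subsetP=> u; rewrite !inE => /andP[-> h]; exact: ltn_trans h lt.
  by apply/subsetPn; exists v; rewrite !inE ?vC ?lt ?ltnn.
have rlt : forall v, v \in C -> (r v < #|C|)%N.
  move=> v vC; apply: proper_card; rewrite properE; apply/andP; split.
    by apply/subsetP=> u; rewrite !inE => /andP[].
  by apply/subsetPn; exists v; rewrite ?inE ?vC ?ltnn.
have rinj : {in C &, injective r}.
  move=> v w vC wC h; case: (ltngtP (sigma v) (sigma w)) => [lt|lt|eq].
  - by have := mono v w vC lt; rewrite h ltnn.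
  - by have := mono w v wC lt; rewrite h ltnn.
  - by apply: sinj; apply: val_inj.
have U : uniq (map r (enum C)).
  by rewrite map_inj_in_uniq ?enum_uniq // => x y; rewrite !mem_enum; exact: rinj.
have sub : {subset map r (enum C) <= iota 0 #|C|}.
  by move=> x /mapP[v]; rewrite mem_enum mem_iota => vC ->; rewrite add0n rlt.
have sz : (size (iota 0 #|C|) <= size (map r (enum C)))%N.
  by rewrite size_iota size_map -cardE.
have [_ eqi] := uniq_min_size U sub sz.
rewrite -big_enum /= -(big_map r xpredT F).
rewrite (perm_big (iota 0 #|C|)); last by apply: uniq_perm => //; exact: iota_uniq.
by rewrite -(big_mkord xpredT F) /index_iota subn0.
Qed.

Theorem corollary3 (T : finType) (e : rel T) (S : {set T})
  (Ci Cj : {set T}) (sigma : T -> 'I_#|T|) (q : nat) :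
  simple_graph e ->
  twin_cover e S ->
  is_component e S Ci -> is_component e S Cj ->
  #|S| < #|Ci| -> #|S| < #|Cj| ->
  odd #|Ci| = odd #|Cj| ->
  (forall u w, u \in Ci -> w \in Cj -> nbhd e u :&: S = nbhd e w :&: S) ->
  layout sigma ->
  (forall v, v \in Ci :|: Cj -> location sigma S v = q) ->
  excess_imbalance e sigma Ci = excess_imbalance e sigma Cj.
Proof.
move=> sg tw Cic Cjc hi hj ho hN lay hloc.
have sinj : injective sigma by exact: bij_inj.
have [w0 w0i] : exists w0, w0 \in Ci.
  by apply/set0Pn; rewrite -card_gt0; exact: leq_ltn_trans (leq0n _) hi.
have [wj wjj] : exists w, w \in Cj.
  by apply/set0Pn; rewrite -card_gt0; exact: leq_ltn_trans (leq0n _) hj.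
have w0u : w0 \in Ci :|: Cj by rewrite inE w0i.
set N0 := nbhd e w0 :&: S.
set P := [set s in S | (sigma s < sigma w0)%N].
have hNv : forall v, v \in Ci :|: Cj -> nbhd e v :&: S = N0.
  move=> v; rewrite inE => /orP[vi|vj].
    by rewrite (hN v wj vi wjj) -(hN w0 wj w0i wjj).
  by rewrite -(hN w0 v w0i vj).
have Pmono : forall v w, (sigma v <= sigma w)%N ->
    [set s in S | (sigma s < sigma v)%N] \subset [set s in S | (sigma s < sigma w)%N].
  move=> v w h; apply/subsetP=> s; rewrite !inE => /andP[-> h']; exact: leq_trans h' h.
have hPv : forall v, v \in Ci :|: Cj -> [set s in S | (sigma s < sigma v)%N] = P.
  move=> v vin; have := hloc v vin; rewrite -(hloc w0 w0u) /location => -[hc].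
  case: (leqP (sigma v) (sigma w0)) => h.
    by rewrite /P; apply/eqP; rewrite eqEcard (Pmono _ _ h) hc leqnn.
  by rewrite /P; apply/eqP; rewrite eq_sym eqEcard (Pmono _ _ (ltnW h)) hc leqnn.
set d : int := (Posz #|N0 :&: P| - Posz #|N0 :\: P|)%R.
have exc : forall C, is_component e S C -> C \subset Ci :|: Cj ->
    excess_imbalance e sigma C = (Hs d #|C| - Posz (gamma #|C|))%R.
  move=> C Cc sub; rewrite /excess_imbalance /Hs.
  rewrite (big_morph Posz PoszD (erefl _)).
  rewrite (eq_bigr (fun v : T => `|d + Posz (2 * #|[set u in C | (sigma u < sigma v)%N]|)%N - Posz #|C| + 1|%R)).
  2: { move=> v vC; have vu := subsetP sub v vC.
    exact: (imb_formula sg tw Cc sinj vC (hNv v vu) (hPv v vu)). }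
  by rewrite (sum_rank C (fun i : nat => `|d + Posz (2 * i)%N - Posz #|C| + 1|%R) sinj).
rewrite !exc ?subsetUl ?subsetUr //.
have h1 : (#|N0 :&: P| + #|N0 :\: P| <= #|S|)%N.
  by rewrite cardsID; apply: subset_leq_card; apply: subsetIr.
apply: Hs_eq => //; rewrite ltr_norml /d; apply/andP; split; lia.
Qed.
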